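(* Let $M$ be a distance-based tree reconstruction method and suppose that for each $n$ it has $l_\infty$ safety radius $\rho_n>0$ on binary trees with $n$ leaves. Then for every $\eta>0$ and every $n$ there is $s_n>0$ such that $M$ has $\eta$-stochastic safety radius (at least) $s_n$ for all binary phylogenetic trees with $n$ leaves. Moreover, $s_n$ can be taken arbitrarily close to $\frac12\rho_n$ as $n\to\infty$: for every $\eta>0$ and every $\theta\in(0,1)$ there exists $N$ such that for all $n\ge N$, $M$ has $\eta$-stochastic safety radius at least $\theta\cdot\frac12\rho_n$ for all binary phylogenetic trees with $n$ leaves.
   Context: A phylogenetic $X$-tree is a tree whose leaves are bijectively labelled by the finite set $X$ and whose interior vertices have degree at least 3; it is binary if all interior vertices have degree 3. For a binary phylogenetic $X$-tree $T$ with positive edge lengths $w$, $d_{(T,w)}$ denotes the tree metric (path-length distance between leaves) and $w_{\min}$ the minimum length of an interior (non-pendant) edge. A distance-based tree reconstruction method $M$ assigns (measurably) to every finite set $X$ and every dissimilarity map $\delta:\{\{x,y\}:x\ne y\in X\}\to\mathbb{R}$ a phylogenetic $X$-tree topology $M(\delta)$; $M(\delta)=T$ means equality of (unrooted) topologies. $M$ has $l_\infty$ safety radius $\rho_n$ (on $n$-leaf trees) if for every binary phylogenetic $X$-tree $T$ with $|X|=n$ and positive edge lengths $w$, and every dissimilarity map $\delta$ on $X$, $\max_{x\ne y}|\delta(x,y)-d_{(T,w)}(x,y)|<\rho_n w_{\min}$ implies $M(\delta)=T$. Random errors model: $\delta(x,y)=d_{(T,w)}(x,y)+\epsilon_{xy}$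 with the $\epsilon_{xy}$ (one per unordered pair) independent $N(0,\sigma^2)$, where $\sigma^2=c^2/\log(n)$ for some $c\ne 0$ and $n=|X|$ ($\log$ the natural logarithm). For $\eta>0$, $M$ has $\eta$-stochastic safety radius $s$ (on $n$-leaf trees) if for every binary phylogenetic $X$-tree $T$ with $|X|=n$ and positive edge lengths, and $\delta$ drawn from the random errors model with parameter $c$, $c<s\cdot w_{\min}$ implies $\mathbb{P}(M(\delta)=T)\ge 1-\eta$. *)

(* Defs.v *)
From HB Require Import structures.
From mathcomp Require Import all_boot all_order all_algebra.
From mathcomp Require Import all_classical all_reals all_analysis.
Unset Printing Implicit Defensive.
Import Order.TTheory GRing.Theory Num.Theory.
Local Open Scope classical_set_scope.
Local Open Scope ring_scope.

(** A finite simple graph on [V] given by a symmetric irreflexive relation. *)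
Definition deg {V : finType} (adj : rel V) (v : V) : nat := #|[set u | adj v u]%SET|.

Definition adj_minus {V : finType} (adj : rel V) (e : {set V}) : rel V :=
  fun a b => adj a b && ([set a; b]%SET != e).

Definition is_edge {V : finType} (adj : rel V) (e : {set V}) : bool :=
  [exists u, exists v, adj u v && (e == [set u; v]%SET)].

(** a tree: connected, and every edge is a bridge (minimally connected) *)
Definition is_tree {V : finType} (adj : rel V) : Prop :=
  symmetric adj /\ irreflexive adj /\
  (forall a b, connect adj a b) /\
  (forall u v, adj u v -> ~~ connect (adj_minus adj [set u; v]%SET) u v).

Record phylo_tree (X : finType) := PhyloTree {
  vert : finType;
  adj : rel vert;
  lab : X -> vert;
  adj_tree : is_tree adj;
  lab_inj : injective lab;
  leaf_lab : forall v, (deg adj v <= 1)%N <-> v \in codom lab;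
  interior_deg : forall v, v \notin codom lab -> (3 <= deg adj v)%N
}.
Arguments vert {X} p.
Arguments adj {X} p.
Arguments lab {X} p.

Definition binary {X : finType} (T : phylo_tree X) : Prop :=
  forall v, v \notin codom (lab T) -> deg (adj T) v = 3%N.

Definition same_topology {X : finType} (T1 T2 : phylo_tree X) : Prop :=
  exists f : vert T1 -> vert T2, bijective f /\
    (forall a b, adj T2 (f a) (f b) = adj T1 a b) /\
    (forall x, f (lab T1 x) = lab T2 x).

Definition pair2 (X : finType) := {S : {set X} | #|S| == 2%N}.

Definition dissim (R : realType) (X : finType) := pair2 X -> R.

Section metric.
Context {R : realType} {X : finType}.

(** edge lengths are functions on edges (2-sets of vertices); only values on
    edges matter *)
Definition edge_len (T : phylo_tree X) := {set vert T} -> R.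

Definition pos_lengths (T : phylo_tree X) (w : edge_len T) : Prop :=
  forall e, is_edge (adj T) e -> 0 < w e.

Definition interior_edge (T : phylo_tree X) (e : {set vert T}) : bool :=
  is_edge (adj T) e && [forall v in e, v \notin codom (lab T)].

(** w_min : minimal length of an interior edge (+oo if there is none) *)
Definition wmin (T : phylo_tree X) (w : edge_len T) : \bar R :=
  \big[Order.min/+oo%E]_(e | interior_edge T e) (w e)%:E.

(** the edge [e] lies on the path between vertices a and b iff it separates them *)
Definition separates (T : phylo_tree X) (e : {set vert T}) (a b : vert T) : bool :=
  ~~ connect (adj_minus (adj T) e) a b.


Definition tree_metric (T : phylo_tree X) (w : edge_len T) : dissim R X :=
  fun S => \sum_(e | is_edge (adj T) e &&
             [exists x in val S, exists y in val S, separates T e (lab T x) (lab T y)])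
            w e.

(** cylinder sets generating the product (Borel) sigma-algebra on dissim maps *)
Definition cylinders : set (set (dissim R X)) :=
  [set A | exists S (B : set R), measurable B /\ A = [set d | B (d S)]].

End metric.

Definition method (R : realType) := forall X : finType, @dissim R X -> phylo_tree X.

Definition method_measurable {R : realType} (M : method R) : Prop :=
  forall (X : finType) (T : phylo_tree X),
    <<s @cylinders R X>> [set d | same_topology (M X d) T].

Definition linf_safety_radius {R : realType} (M : method R) (n : nat) (rho : R) : Prop :=
  forall (X : finType) (T : phylo_tree X) (w : edge_len T),
    #|X| = n -> binary T -> pos_lengths T w ->
    forall d : dissim R X,
      (forall S, (`|d S - tree_metric T w S|%:E < rho%:E * wmin T w)%E) ->
      same_topology (M X d) T.

Definition random_errors {R : realType} {X : finType} (c : R)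
  {dO : measure_display} {Omega : measurableType dO} (P : probability Omega R)
  (eps : pair2 X -> Omega -> R) : Prop :=
  (forall S, measurable_fun setT (eps S)) /\
  (forall S (B : set R), measurable B ->
     P (eps S @^-1` B) = normal_prob 0 (Num.sqrt (c ^+ 2 / ln (#|X|%:R)))  B) /\
  (forall B : pair2 X -> set R, (forall S, measurable (B S)) ->
     P [set om | forall S, B S (eps S om)] = (\prod_(S : pair2 X) P (eps S @^-1` B S))%E).

Definition stoch_safety_radius {R : realType} (M : method R) (eta : R) (n : nat) (s : R) : Prop :=
  forall (X : finType) (T : phylo_tree X) (w : edge_len T),
    #|X| = n -> binary T -> pos_lengths T w ->
    forall c : R, 0 < c -> (c%:E < s%:E * wmin T w)%E ->
    forall (dO : measure_display) (Omega : measurableType dO) (P : probability Omega R)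
           (eps : pair2 X -> Omega -> R),
      random_errors c P eps ->
      ((1 - eta)%:E <= P [set om | same_topology (M X (fun S => (tree_metric T w S + eps S om)%R)) T])%E.

(* Main.v *)
Require Import Defs.
From HB Require Import structures.
From mathcomp Require Import all_boot all_order all_algebra.
From mathcomp Require Import all_classical all_reals all_analysis.
From mathcomp Require Import lra measurable_realfun ring.
Import Order.TTheory GRing.Theory Num.Theory.
Local Open Scope ring_scope.

Lemma exp_cmp (R : realType) (rho s W c L t : R) : 0 < rho -> 0 < s -> 0 < W -> 0 < c -> 0 < L ->
  1 <= t -> c < s * W ->
  expR (- (1 - t ^-2) * (rho * W) ^+ 2 / (Num.sqrt (c ^+ 2 / L) ^+ 2 *+ 2)) <=
  expR (- (1 - t ^-2) * (rho / s) ^+ 2 * L / 2).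
Proof.
move=> r0 s0 W0 c0 L0 t1 hc.
rewrite ler_expR sqr_sqrtr; last by rewrite divr_ge0 ?sqr_ge0 // ltW.
have ti : t ^-2 <= 1 by rewrite invf_le1 ?exprn_gt0 ?exprn_ege1 //; lra.
set u := 1 - t ^-2.
have u0 : 0 <= u by rewrite /u subr_ge0.
have p0 : 0 < rho / s by rewrite divr_gt0.
have hpq : rho / s <= rho * W / c.
  rewrite ler_pdivlMr // mulrAC ler_pdivrMr //.
  rewrite -mulrA ler_pM2l // mulrC; exact: ltW.
have key : (rho / s) ^+ 2 <= (rho * W / c) ^+ 2.
  rewrite ler_sqr ?nnegrE ?ltW //.
  rewrite ltr_pdivlMr // mulrAC ltr_pdivrMr // -mulrA ltr_pM2l // mulrC //.
  by rewrite divr_gt0 // mulr_gt0.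
have -> : - u * (rho * W) ^+ 2 / (c ^+ 2 / L *+ 2) = - u * (rho * W / c) ^+ 2 * L / 2.
  rewrite -mulr_natr; field; rewrite ?gt_eqF //.
set Q := (rho * W / c) ^+ 2 in key *; set P := (rho / s) ^+ 2 in key *.
have -> : - u * Q * L / 2 = - (u * L / 2 * Q) by ring.
have -> : - u * P * L / 2 = - (u * L / 2 * P) by ring.
by rewrite lerN2 ler_wpM2l // divr_ge0 // mulr_ge0 // ltW.
Qed.


Lemma fin_bound (R : realType) (n : nat) (t eta k : R) : (2 <= n)%N -> 0 < t -> 0 < eta ->
  2 * ln (n%:R : R) + ln (t / eta) <= k ->
  (n%:R) ^+ 2 * (t * expR (- k)) <= eta.
Proof.
move=> n2 t0 e0 hk.
have n0 : 0 < (n%:R : R) by rewrite ltr0n; apply: leq_trans n2.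
rewrite ln_div ?posrE // in hk.
rewrite -[n%:R](@lnK R) ?posrE // -[t](@lnK R) ?posrE // -[eta in _ <= eta](@lnK R) ?posrE //.
rewrite -expRM_natl -!expRD ler_expR.
lra.
Qed.

Section AuxSets.
Local Open Scope classical_set_scope.

Section tail.
Context {R : realType}.

Lemma peak_scale (s t : R) : 0 < s -> 0 < t -> normal_peak s = t * normal_peak (s * t).
Proof.
move=> s0 t0; rewrite /normal_peak.
have -> : (s * t) ^+ 2 * pi *+ 2 = t ^+ 2 * (s ^+ 2 * pi *+ 2).
  by rewrite mulrnAr exprMn mulrA [t ^+ 2 * _]mulrC -mulrnAr.
rewrite sqrtrM ?sqr_ge0 // sqrtr_sqr gtr0_norm // invfM mulrA mulfV ?gt_eqF // mul1r.
done.
Qed.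

Lemma exp_split (s t a x : R) : 0 < s -> 1 <= t -> 0 <= a -> a <= `|x| ->
  expR (- (x - 0) ^+ 2 / (s ^+ 2 *+ 2)) <=
  expR (- (1 - t ^-2) * a ^+ 2 / (s ^+ 2 *+ 2)) * expR (- (x - 0) ^+ 2 / ((s * t) ^+ 2 *+ 2)).
Proof.
move=> s0 t1 a0 ax; rewrite -expRD ler_expR subr0.
have q0 : 0 < s ^+ 2 *+ 2 by rewrite pmulrn_rgt0 // exprn_gt0.
have t0 : 0 < t by lra.
have -> : (s * t) ^+ 2 *+ 2 = (s ^+ 2 *+ 2) * t ^+ 2 by rewrite exprMn mulrnAl.
have hx : a ^+ 2 <= x ^+ 2.
  rewrite -[x ^+ 2]real_normK ?num_real // ler_sqr ?nnegrE // .
have ti : t ^-2 <= 1 by rewrite invf_le1 ?exprn_gt0 // exprn_ege1.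
have ti0 : 0 <= t ^-2 by rewrite invr_ge0 exprn_ge0 // ltW.
have -> : - x ^+ 2 / (s ^+ 2 *+ 2 * t ^+ 2) = (- x ^+ 2 * t ^-2) / (s ^+ 2 *+ 2).
  by rewrite invfM mulrA mulrAC.
rewrite -mulrDl ler_pM2r ?invr_gt0 //.
nra.
Qed.
End tail.

Section tail2.
Context {R : realType}.
Local Notation mu := (@lebesgue_measure R).

Lemma measurable_big (a : R) : measurable [set x : R | a <= `|x|].
Proof.
have := @normr_measurable R setT measurableT `[a, +oo[%classic (measurable_itv _).
rewrite setTI; congr measurable; apply/seteqP; split => x /=; rewrite in_itv /= andbT //.
Qed.

Lemma tail_bound (s t a : R) : 0 < s -> 1 <= t -> 0 <= a ->
  (normal_prob 0 s [set x | (a <= `|x|)%R] <=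
   (t * expR (- (1 - t ^-2) * a ^+ 2 / (s ^+ 2 *+ 2)))%R%:E)%E.
Proof.
move=> s0 t1 a0.
have t0 : 0 < t by lra.
set K := t * expR _.
have K0 : 0 <= K by rewrite mulr_ge0 ?expR_ge0 // ltW.
have st0 : s * t != 0 by rewrite mulf_neq0 // gt_eqF.
have key : forall x, a <= `|x| -> normal_pdf 0 s x <= K * normal_pdf 0 (s * t) x.
  move=> x ax; rewrite /normal_pdf (gt_eqF s0) (negbTE st0) /normal_fun.
  rewrite (peak_scale _ _ s0 t0) /K.
  have := exp_split _ _ _ _ s0 t1 a0 ax.
  set E0 := expR (- (x - 0) ^+ 2 / (s ^+ 2 *+ 2)).
  set E1 := expR (- (1 - t ^- 2) * a ^+ 2 / (s ^+ 2 *+ 2)).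
  set E2 := expR (- (x - 0) ^+ 2 / ((s * t) ^+ 2 *+ 2)).
  set P := normal_peak (s * t).
  move=> h.
  have P0 : 0 <= P by apply: normal_peak_ge0.
  have -> : t * E1 * (P * E2) = t * P * (E1 * E2) by rewrite !mulrA; congr (_ * _); rewrite -!mulrA [E1 * P]mulrC.
  by rewrite ler_wpM2l // mulr_ge0 // ltW.
rewrite /normal_prob.
apply: (@le_trans _ _ (\int[mu]_(x in [set x | (a <= `|x|)%R]) (K%:E * (normal_pdf 0 (s * t) x)%:E))%E).
  apply: ge0_le_integral => //.
  - exact: measurable_big.
  - by move=> x _; rewrite lee_fin normal_pdf_ge0.
  - apply/measurable_EFinP; apply: measurable_funS (measurable_normal_pdf _ _) => //.
  - apply/measurable_EFinP; apply: measurable_funM => //.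
    apply: measurable_funS (measurable_normal_pdf _ _) => //.
rewrite (@ge0_integralZl _ _ _ mu _ (measurable_big a)); last 3 first.
- apply/measurable_EFinP; apply: measurable_funS (measurable_normal_pdf _ _) => //.
- by move=> x _; rewrite lee_fin normal_pdf_ge0.
- by rewrite lee_fin.
rewrite -[X in (_ <= X)%E]mule1 lee_wpmul2l ?lee_fin //.
rewrite -(integral_normal_pdf 0 (s * t)).
apply: ge0_subset_integral => //.
- exact: measurable_big.
- apply/measurable_EFinP; exact: measurable_normal_pdf.
- by move=> x _; rewrite lee_fin normal_pdf_ge0.
Qed.
End tail2.


Lemma preimage_gen d (Om : measurableType d) (A : Type) (G : set (set A)) (f : Om -> A) :
  (forall B, G B -> measurable (f @^-1` B)) ->
  forall B, <<s G>> B -> measurable (f @^-1` B).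
Proof.
move=> HG B HB; apply: (HB [set B | measurable (f @^-1` B)]); split => //.
split => /=.
- by rewrite preimage_set0.
- by move=> C mC; rewrite setTD preimage_setC; exact: measurableC.
- by move=> F mF; rewrite preimage_bigcup; exact: bigcupT_measurable.
Qed.

Lemma union_bound d (T : measurableType d) (R : realType)
  (mu : {measure set T -> \bar R}) (I : finType) (F : I -> set T) :
  (forall i, measurable (F i)) ->
  (mu [set x | exists i, F i x] <= \sum_(i : I) mu (F i))%E.
Proof.
move=> mF.
have -> : [set x | exists i, F i x] = \big[setU/set0]_(i <- enum I) F i.
  rewrite -bigcup_seq; apply/seteqP; split => x /=.
  - by move=> [i Fi]; exists i => //=; rewrite mem_enum.
  - by move=> [i _ Fi]; exists i.
rewrite [X in (_ <= X)%E](_ : _ = \sum_(i <- enum I) mu (F i))%E; last first.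
  by rewrite big_enum.
elim: (enum I) => [|i r IH]; first by rewrite !big_nil measure0.
rewrite !big_cons; apply: le_trans (measureU2 _ _ _) _ => //.
  exact: bigsetU_measurable.
by rewrite leeD2l.
Qed.


Lemma core_prob (R : realType) d (Om : measurableType d) (P : probability Om R)
  (I : finType) (eps : I -> Om -> R) (s a t eta : R) (E : set Om) :
  (forall i, measurable_fun setT (eps i)) ->
  (forall i (B : set R), measurable B -> P (eps i @^-1` B) = normal_prob 0 s B) ->
  0 < s -> 0 <= a -> 1 <= t ->
  measurable E ->
  (forall om, (forall i, `|eps i om| < a) -> E om) ->
  #|I|%:R * (t * expR (- (1 - t ^-2) * a ^+ 2 / (s ^+ 2 *+ 2))) <= eta ->
  ((1 - eta)%:E <= P E)%E.
Proof.
move=> meps heps s0 a0 t1 mE GE hb.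
set K := t * expR _ in hb.
pose Bad := [set x : R | (a <= `|x|)%R].
have mBad : measurable Bad by exact: measurable_big.
have mF : forall i, measurable (eps i @^-1` Bad).
  by move=> i; rewrite -[_ @^-1` _]setTI; exact: (meps i measurableT).
pose H := [set om | exists i, (eps i @^-1` Bad) om].
have mH : measurable H.
  have -> : H = \bigcup_(i in [set: I]) (eps i @^-1` Bad).
    by apply/seteqP; split => x /= [i]; [move=> h; exists i| move=> _ h; exists i].
  by apply: fin_bigcup_measurable => //; exact: finite_setT.
have HG : ~` H `<=` E.
  move=> om /= nH; apply: GE => i; rewrite ltNge; apply/negP => h.
  by apply: nH; exists i.
have PH : (P H <= (\sum_(i : I) K)%:E)%E.
  apply: (le_trans (@union_bound _ _ _ P _ (fun i => eps i @^-1` Bad) mF)).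
  rewrite -sumEFin; apply: lee_sum => i _.
  have e := heps i Bad mBad.
  have -> : (P : {measure set Om -> \bar R}) (eps i @^-1` Bad) = normal_prob 0 s Bad by exact: e.
  exact: tail_bound.
apply: (@le_trans _ _ (P (~` H))); last first.
  by apply: le_measure => //; rewrite inE //; exact: measurableC.
rewrite probability_setC //.
have [r Hr] : exists r, P H = r%:E.
  have h0 : (0 <= P H)%E by exact: measure_ge0.
  move: h0 (probability_le1 P mH).
  case: (P H) => [r _ _|_|]; first by exists r.
  - by rewrite leNgt ltry.
  - by rewrite leNgt ltNy0.
move: PH; rewrite Hr sumr_const -EFinB !lee_fin => PH.
rewrite mulr_natl in hb.
lra.
Qed.


Lemma wmin_cases (R : realType) (X : finType) (T : phylo_tree X) (w : @edge_len R X T) :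
  pos_lengths T w -> wmin T w = +oo%E \/ exists W : R, 0 < W /\ wmin T w = W%:E.
Proof.
move=> hp; rewrite /wmin.
apply: (big_ind (fun x : \bar R => x = +oo%E \/ exists W : R, 0 < W /\ x = W%:E)).
- by left.
- move=> x y hx hy; rewrite /Order.min; case: ifP => _; [exact: hx|exact: hy].
- move=> e /andP[he _]; right; exists (w e); split => //; exact: hp.
Qed.

Lemma pair2_empty (X : finType) : (#|X| <= 1)%N -> pair2 X -> False.
Proof.
move=> hX [S /eqP hS]; have := max_card S; rewrite hS => h.
by have := leq_trans h hX.
Qed.

Lemma pair2_card (X : finType) : (#|{: pair2 X}| <= #|X| * #|X|)%N.
Proof.
rewrite card_sig.
have -> : #|[pred x : {set X} | #|x| == 2]| = #|[set A : {set X} | #|A| == 2]%SET|.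
  by apply: eq_card => A; rewrite !inE.
rewrite card_draws bin2 leq_half_double.
apply: (leq_trans (leq_mul (leqnn _) (leq_pred _))).
by rewrite -addnn -addn1 -addnA leq_addr.
Qed.


Lemma stoch_of (R : realType) (M : method R) (M_meas : method_measurable M)
  (rho : R) (n : nat) (eta s t : R) :
  linf_safety_radius M n rho -> 0 < rho -> 0 < s -> 1 <= t -> 0 < eta ->
  ((2 <= n)%N -> (n%:R) ^+ 2 * (t * expR (- (1 - t ^-2) * (rho / s) ^+ 2 * ln (n%:R) / 2)) <= eta) ->
  stoch_safety_radius M eta n s.
Proof.
move=> Hsafe r0 s0 t1 e0 hb X T w hn hbin hpos c c0 hc dO Om P eps [meps [hdist _]].
pose d om : dissim R X := fun S => (tree_metric T w S + eps S om)%R.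
set E := [set om | _].
have triv : (forall om, E om) -> ((1 - eta)%:E <= P E)%E.
  move=> hE; have -> : E = setT by apply/seteqP; split => // om _; exact: hE.
  by rewrite probability_setT lee_fin; lra.
have safe : forall om, (forall S, (`|eps S om|%:E < rho%:E * wmin T w)%E) -> E om.
  move=> om h; apply: (Hsafe X T w hn hbin hpos (d om)) => S.
  by rewrite /d (addrC (tree_metric T w S)) addrK.
case: (@wmin_cases R X T w hpos) => [hinf | [W [W0 hW]]].
  apply: triv => om; apply: safe => S; rewrite hinf muleC gt0_mulye ?lte_fin // ltry //.
case: (leqP n 1) => hn1.
  apply: triv => om; apply: safe => S; exfalso.
  by apply: (@pair2_empty X) => //; rewrite hn.
have L0 : 0 < ln (n%:R : R) by apply: ln_gt0; rewrite ltr1n.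
set sg := Num.sqrt (c ^+ 2 / ln (n%:R : R)).
have sg0 : 0 < sg by rewrite sqrtr_gt0 divr_gt0 // exprn_gt0.
move: hc; rewrite hW -EFinM lte_fin => hc.
apply: (@core_prob R dO Om P (pair2 X) eps sg (rho * W) t eta E).
- exact: meps.
- by move=> S B mB; move: (hdist S B mB); rewrite hn.
- exact: sg0.
- by rewrite mulr_ge0 // ltW.
- exact: t1.
- apply: (@preimage_gen _ _ _ _ d _ _ (M_meas X T)).
  move=> B [S [B0 [mB0 ->]]].
  have := measurable_funD (measurable_cst (tree_metric T w S)) (meps S) measurableT mB0.
  by rewrite setTI.
- by move=> om h; apply: safe => S; rewrite hW -EFinM lte_fin; exact: h.
- apply: le_trans (hb hn1).
  apply: ler_pM.
  + exact: ler0n.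
  + by rewrite mulr_ge0 ?expR_ge0 // ltW //; lra.
  + have h := pair2_card X; rewrite hn in h.
    by rewrite expr2 -natrM ler_nat.
  + rewrite ler_wpM2l //; first lra.
    exact: exp_cmp.
Qed.

End AuxSets.


Theorem proposition2 (R : realType) (M : method R)
  (M_meas : method_measurable M)
  (rho : nat -> R) (rho_pos : forall n, 0 < rho n)
  (M_safe : forall n, linf_safety_radius M n (rho n)) :
  (forall eta : R, 0 < eta -> forall n : nat,
     exists s : R, 0 < s /\ stoch_safety_radius M eta n s) /\
  (forall eta : R, 0 < eta -> forall theta : R, 0 < theta < 1 ->
     exists N : nat, forall n : nat, (N <= n)%N ->
       stoch_safety_radius M eta n (theta * (rho n / 2))).
Proof.
split.
- move=> eta e0 n.
  pose L := ln (n%:R : R).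
  pose u : R := 1 - 2 ^-2.
  have u0 : 0 < u by rewrite /u subr_gt0 invf_lt1 ?exprn_gt0 //; lra.
  pose B := 1 + 2 / u * (2 + `|ln (2 / eta) / L|).
  have B1 : 1 <= B.
    rewrite /B lerDl mulr_ge0 //.
    - by rewrite divr_ge0 // ltW.
  have B0 : 0 < B by lra.
  exists (rho n / B); split; first by rewrite divr_gt0.
  apply: (@stoch_of R M M_meas (rho n) n eta (rho n / B) 2 (M_safe n) (rho_pos n)).
  + by rewrite divr_gt0.
  + lra.
  + exact: e0.
  move=> n2.
  have Lp : 0 < L by apply: ln_gt0; rewrite ltr1n.
  have r0 := rho_pos n.
  have -> : - (1 - 2 ^-2) * (rho n / (rho n / B)) ^+ 2 * ln (n%:R : R) / 2 = - (u * B ^+ 2 * L / 2).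
    by rewrite /u /L; field; rewrite ?gt_eqF //; apply/andP; split; rewrite gt_eqF.
  apply: fin_bound => //; rewrite -/L.
  set q := ln (2 / eta) / L.
  have hq : ln (2 / eta) <= `|q| * L.
    rewrite -[X in X <= _](divfK (lt0r_neq0 Lp)) ler_wpM2r ?ler_norm //; exact: ltW.
  have hB : u * B * L / 2 = u * L / 2 + (2 + `|q|) * L.
    by rewrite /B; field; rewrite gt_eqF.
  have hBB : u * B * L / 2 <= u * B ^+ 2 * L / 2.
    rewrite -!mulrA ler_pM2l // !mulrA ler_pM2r ?invr_gt0 // ler_pM2r //.
    by rewrite ler_peMr //; lra.
  have h0 : 0 <= u * L / 2 by rewrite divr_ge0 // mulr_ge0 // ltW.
  lra.
- move=> eta e0 theta /andP[th0 th1].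
  pose v : R := 1 - theta ^+ 2.
  have v0 : 0 < v by rewrite /v subr_gt0 expr_lt1 // ltW.
  have v1 : v < 1 by rewrite /v ltrBlDr ltrDl exprn_gt0.
  pose t : R := 2 / v.
  have t1 : 1 <= t by rewrite /t ler_pdivlMr // mul1r; lra.
  have t0 : 0 < t by lra.
  pose u : R := 1 - t ^-2.
  have hu : u = 1 - v ^+ 2 / 4 by rewrite /u /t; field; rewrite lt0r_neq0.
  have th2 : 0 < theta ^+ 2 by rewrite exprn_gt0.
  have uth : theta ^+ 2 < u.
    rewrite hu.
    have -> : theta ^+ 2 = 1 - v by rewrite /v; ring.
    have : 0 < v * (1 - v / 4) by rewrite mulr_gt0 //; lra.
    rewrite mulrBr mulr1 => h.
    have -> : v ^+ 2 / 4 = v * (v / 4) by rewrite expr2 mulrA.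
    lra.
  pose al : R := 2 * u / theta ^+ 2 - 2.
  have al0 : 0 < al.
    by rewrite /al subr_gt0 ltr_pdivlMr // ltr_pM2l.
  pose y : R := `|ln (t / eta)| / al.
  exists (Num.truncn (expR y)).+2 => n hN.
  have r0 := rho_pos n.
  have s0 : 0 < theta * (rho n / 2) by rewrite mulr_gt0 // divr_gt0.
  apply: (@stoch_of R M M_meas (rho n) n eta (theta * (rho n / 2)) t (M_safe n) (rho_pos n) s0 t1 e0).
  move=> n2.
  pose L := ln (n%:R : R).
  have Lp : 0 < L by apply: ln_gt0; rewrite ltr1n.
  have Ly : y <= L.
    rewrite /L -[y]expRK ler_ln ?posrE ?expR_gt0 ?ltr0n //; last by apply: leq_trans n2.
    apply: le_trans (ltW (truncnS_gt _)) _.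
    rewrite ler_nat; apply: leq_trans hN; exact: leqnSn.
  have -> : - (1 - t ^-2) * (rho n / (theta * (rho n / 2))) ^+ 2 * ln (n%:R : R) / 2
        = - ((al + 2) * L).
    by rewrite /al /u /L; field; rewrite ?lt0r_neq0.
  apply: fin_bound => //; rewrite -/L.
  have : `|ln (t / eta)| <= al * L.
    by rewrite -ler_pdivrMl // mulrC.
  have := ler_norm (ln (t / eta)).
  lra.
Qed.
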